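(* Let $L_n$ and $PL_n$ be as in the context. Then $PL_n$ is a non-abelian free group of finite rank if and only if $n\ge 4$ (for $n=2,3$, $PL_n$ is trivial).
   Context: For $n\ge 2$, $L_n=\langle y_1,\dots,y_{n-1}\mid y_j^2=1\ (1\le j\le n-1),\ y_iy_{i+1}y_i=y_{i+1}y_iy_{i+1}\ (1\le i\le n-2)\rangle$ (no relations between $y_i,y_j$ with $|i-j|\ge 2$). Let $\pi:L_n\to S_n$ be the surjective homomorphism with $\pi(y_i)=(i\ i{+}1)$, the transposition, and $PL_n=\ker\pi$. *)

(* Defs.v *)
(* The group L_n is given by its presentation: elements are
   words in the generators modulo the congruence generated by the relators. *)
From mathcomp Require Import all_boot all_order all_fingroup.
Set Implicit Arguments. Unset Strict Implicit. Unset Printing Implicit Defensive.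

(* A letter j : nat (0-based) stands for the generator y_(j+1);
   it is a valid letter of L_n iff j + 1 <= n - 1, i.e. j.+1 < n. *)
Definition valid_word (n : nat) (w : seq nat) : bool := all (fun j => j.+1 < n) w.

Inductive Lequiv (n : nat) : seq nat -> seq nat -> Prop :=
| Lequiv_refl w : Lequiv n w w
| Lequiv_sym u v : Lequiv n u v -> Lequiv n v u
| Lequiv_trans u v w : Lequiv n u v -> Lequiv n v w -> Lequiv n u w
| Lequiv_sq u v j : j.+1 < n -> Lequiv n (u ++ [:: j; j] ++ v) (u ++ v)
| Lequiv_braid u v i : i.+2 < n ->
    Lequiv n (u ++ [:: i; i.+1; i] ++ v) (u ++ [:: i.+1; i; i.+1] ++ v).

Definition adj_transp (n j : nat) : 'S_n :=
  match (insub j : option 'I_n), (insub j.+1 : option 'I_n) with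
  | Some a, Some b => tperm a b
  | _, _ => 1%g
  end.

Definition pi_word (n : nat) (w : seq nat) : 'S_n :=
  foldr (fun j s => (adj_transp n j * s)%g) 1%g w.

Definition in_PL (n : nat) (w : seq nat) : Prop :=
  valid_word n w /\ pi_word n w = 1%g.

(* Words of the free group F_k on basis 'I_k : (i, true) = x_i, (i, false) = x_i^-1. *)
Fixpoint reduced (k : nat) (f : seq ('I_k * bool)) : bool :=
  match f with
  | x :: ((y :: _) as t) => ~~ ((x.1 == y.1) && (x.2 != y.2)) && reduced t
  | _ => true
  end.

(* Image of a free word under x_i |-> b i in L_n. Inverse of a word in the
   involutive generators y_j is its reversal. *)
Definition eval_free (k : nat) (b : 'I_k -> seq nat) (f : seq ('I_k * bool)) : seq nat :=
  flatten (map (fun x => if x.2 then b x.1 else rev (b x.1)) f).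

(* PL_n is free of finite rank: there is a finite family b_1..b_k in PL_n
   such that the induced homomorphism F_k -> PL_n is surjective and injective
   (no nonempty reduced word maps to the identity). *)
Definition PL_free_finite_rank (n : nat) : Prop :=
  exists (k : nat) (b : 'I_k -> seq nat),
    (forall i, in_PL n (b i)) /\
    (forall w, in_PL n w -> exists f, Lequiv n w (eval_free b f)) /\
    (forall f, reduced f -> Lequiv n (eval_free b f) [::] -> f = [::]).

Definition PL_nonabelian (n : nat) : Prop :=
  exists u v, in_PL n u /\ in_PL n v /\ ~ Lequiv n (u ++ v) (v ++ u).

Definition PL_trivial (n : nat) : Prop :=
  forall w, in_PL n w -> Lequiv n w [::].

(* Main.v *)
From Stdlib Require Import ClassicalEpsilon.
Require Import Defs.
From mathcomp Require Import all_boot all_order all_fingroup zify.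
Set Implicit Arguments. Unset Strict Implicit. Unset Printing Implicit Defensive.

Section Basics.
Variable n : nat.
Local Notation Lq := (Lequiv n).

Lemma Lq_ctx a b u v : Lq u v -> Lq (a ++ u ++ b) (a ++ v ++ b).
Proof.
elim=> {u v} [w|u v _ IH|u v w _ IH1 _ IH2|u v j hj|u v i hi].
- exact: Lequiv_refl.
- exact: Lequiv_sym.
- exact: Lequiv_trans IH1 IH2.
- rewrite !catA -(catA a u) -!catA (catA a u).
  have := Lequiv_sq (a ++ u) (v ++ b) hj. by rewrite -!catA.
- have := Lequiv_braid (a ++ u) (v ++ b) hi. by rewrite -!catA.
Qed.

Lemma Lq_cat u u' v v' : Lq u u' -> Lq v v' -> Lq (u ++ v) (u' ++ v').
Proof.
move=> H1 H2; apply: Lequiv_trans (_ : Lq (u' ++ v) _).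
  exact: (Lq_ctx [::] v H1).
by have H := Lq_ctx u' [::] H2; rewrite !cats0 in H.
Qed.

Lemma Lq_catl u v v' : Lq v v' -> Lq (u ++ v) (u ++ v').
Proof. by move=> H; apply: Lq_cat => //; apply: Lequiv_refl. Qed.
Lemma Lq_catr u u' v : Lq u u' -> Lq (u ++ v) (u' ++ v).
Proof. by move=> H; apply: Lq_cat => //; apply: Lequiv_refl. Qed.

Lemma Lq_revK w : valid_word n w -> Lq (w ++ rev w) [::].
Proof.
elim: w => [|j w IH] /=; first by move=> _; exact: (Lequiv_refl n [::]).
case/andP=> hj hw; rewrite rev_cons -cats1.
have H1 := Lq_ctx [:: j] [:: j] (IH hw).
have H2 := @Lequiv_sq n [::] [::] _ hj.
rewrite /= -catA in H1; rewrite /= in H2 *.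
exact: Lequiv_trans H1 H2.
Qed.

Lemma valid_rev w : valid_word n (rev w) = valid_word n w.
Proof. by rewrite /valid_word all_rev. Qed.
Lemma valid_cat u v : valid_word n (u ++ v) = valid_word n u && valid_word n v.
Proof. by rewrite /valid_word all_cat. Qed.

Lemma Lq_Krev w : valid_word n w -> Lq (rev w ++ w) [::].
Proof. by move=> hw; have := Lq_revK (w := rev w); rewrite revK valid_rev; apply. Qed.

Lemma Lq_valid u v : Lq u v -> valid_word n u = valid_word n v.
Proof.
elim=> {u v} [//|u v _ ->|u v w _ -> _ ->|u v j hj|u v i hi] //.
- by rewrite !valid_cat /valid_word /= hj.
- rewrite !valid_cat /valid_word /= hi (ltnW hi).
  done.
Qed.

Lemma adj_transpE j (hj : j.+1 < n) :
  adj_transp n j = tperm (Ordinal (ltnW hj)) (Ordinal hj).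
Proof. by rewrite /adj_transp (insubT (fun m => m < n) (ltnW hj)) (insubT (fun m => m < n) hj). Qed.

Lemma adj_transp_inv j : (adj_transp n j * adj_transp n j = 1)%g.
Proof.
rewrite /adj_transp; case: (insub j) => [a|]; last by rewrite mulg1.
case: (insub j.+1) => [b|]; last by rewrite mulg1.
by rewrite tperm2.
Qed.

Lemma adj_transp_braid i : i.+2 < n ->
  (adj_transp n i * adj_transp n i.+1 * adj_transp n i =
   adj_transp n i.+1 * adj_transp n i * adj_transp n i.+1)%g.
Proof.
move=> hi; have hb : i.+1 < n := ltnW hi.
rewrite (adj_transpE hb) (adj_transpE hi).
set a := Ordinal (ltnW hb); set b := Ordinal hb; set c := Ordinal hi.
have -> : Ordinal (ltnW hi) = b by apply: val_inj.
have Hab : a != b by rewrite -val_eqE /= neq_ltn ltnSn.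
have Hbc : b != c by rewrite -val_eqE /= neq_ltn ltnSn.
have Hac : a != c by rewrite -val_eqE /= neq_ltn ltnW.
have E1 : (tperm a b * tperm b c * tperm a b = tperm b c ^ tperm a b)%g.
  by rewrite /conjg tpermV mulgA.
have E2 : (tperm b c * tperm a b * tperm b c = tperm a b ^ tperm b c)%g.
  by rewrite /conjg tpermV mulgA.
rewrite E1 E2 !tpermJ tpermR tpermL tpermD // ?(eq_sym c) //.
by rewrite tpermD // eq_sym.
Qed.

Lemma pi_cat u v : pi_word n (u ++ v) = (pi_word n u * pi_word n v)%g.
Proof. by elim: u => [|j u IH] /=; rewrite ?mul1g // IH mulgA. Qed.

Lemma pi_rev w : pi_word n (rev w) = (pi_word n w)^-1%g.
Proof.
elim: w => [|j w IH] /=; first by rewrite invg1.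
rewrite rev_cons -cats1 pi_cat IH /= mulg1 invMg; congr (_ * _)%g.
by rewrite -[RHS]mul1g -(adj_transp_inv j) -mulgA mulgV mulg1.
Qed.

Lemma Lq_pi u v : Lq u v -> pi_word n u = pi_word n v.
Proof.
elim=> {u v} [//|u v _ ->|u v w _ -> _ ->|u v j hj|u v i hi] //.
- by rewrite !pi_cat /= mulg1 adj_transp_inv mul1g.
- rewrite !pi_cat /= !mulg1; congr (_ * _)%g; congr (_ * _)%g.
  by have := adj_transp_braid hi; rewrite -!mulgA.
Qed.

End Basics.

Section Free.
Variable L : eqType.
Notation letter := (L * bool)%type.

Definition linv (x : letter) : letter := (x.1, ~~ x.2).
Definition invw (w : seq letter) : seq letter := rev (map linv w).

Fixpoint redw (f : seq letter) : bool :=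
  match f with
  | x :: ((y :: _) as t) => ~~ ((x.1 == y.1) && (x.2 != y.2)) && redw t
  | _ => true
  end.

Lemma linvK x : linv (linv x) = x.
Proof. by case: x => a s; rewrite /linv /= negbK. Qed.

Lemma linv_eq x y : (y == linv x) = ((x.1 == y.1) && (x.2 != y.2)).
Proof.
case: x y => a s [c t]; rewrite /linv /= xpair_eqE eq_sym; congr (_ && _).
by case: s; case: t.
Qed.

Definition fpush (x : letter) (r : seq letter) : seq letter :=
  match r with
  | y :: r' => if y == linv x then r' else x :: r
  | [::] => [:: x]
  end.

Definition norm (w : seq letter) := foldr fpush [::] w.

Lemma redw_cons x r : redw (x :: r) = redw r && (if r is y :: _ then y != linv x else true).
Proof. by case: r => [|y r] //=; rewrite linv_eq andbC. Qed.

Lemma redw_behead x r : redw (x :: r) -> redw r.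
Proof. by rewrite redw_cons => /andP[]. Qed.

Lemma fpush_red x r : redw r -> redw (fpush x r).
Proof.
case: r => [|y r] // Hr; rewrite /fpush; case: ifP => Hy; first exact: redw_behead Hr.
by rewrite redw_cons Hr Hy.
Qed.

Lemma fpushK x r : redw r -> fpush (linv x) (fpush x r) = r.
Proof.
case: r => [|y r]; first by rewrite /= linvK eqxx.
move=> Hr; rewrite /fpush; case: ifP => Hy.
- case: r Hr => [|z r]; first by move/eqP: Hy => ->.
  rewrite redw_cons => /andP [_ Hz]; move/eqP: Hy Hz => ->.
  by move/negbTE => ->.
- by rewrite linvK eqxx.
Qed.

Lemma norm_red w : redw (norm w).
Proof. elim: w => //= x w IH; exact: fpush_red. Qed.

Lemma norm_id w : redw w -> norm w = w.
Proof.
elim: w => //= x w IH Hw; rewrite IH ?(redw_behead Hw) //.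
case: w Hw {IH} => //= y w /andP [H _]; rewrite linv_eq.
by rewrite (negbTE H).
Qed.

Lemma foldr_red r w : redw r -> redw (foldr fpush r w).
Proof. by move=> Hr; elim: w => //= x w IH; apply: fpush_red. Qed.

Lemma foldr_norm r w : redw r -> foldr fpush r w = foldr fpush r (norm w).
Proof.
move=> Hr; elim: w => //= x w ->.
have Hn := norm_red w.
case E: (norm w) Hn => [|y m] // Hm.
rewrite [fpush x (y :: m)]/fpush; case: ifP => Hy //; move/eqP: Hy => ->.
rewrite /= -{1}(linvK x) fpushK //; apply: foldr_red.
done.
Qed.

Lemma norm_cat A B : norm (A ++ B) = foldr fpush (norm B) A.
Proof. by rewrite /norm foldr_cat. Qed.

Lemma normCr A B : norm (A ++ norm B) = norm (A ++ B).
Proof. by rewrite !norm_cat norm_id // norm_red. Qed.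

Lemma normCl A B : norm (norm A ++ B) = norm (A ++ B).
Proof. by rewrite !norm_cat -foldr_norm // norm_red. Qed.

Lemma invw_cat A B : invw (A ++ B) = invw B ++ invw A.
Proof. by rewrite /invw map_cat rev_cat. Qed.

Lemma invwK A : invw (invw A) = A.
Proof.
by rewrite /invw map_rev revK -map_comp (eq_map linvK) map_id.
Qed.

Lemma invw_cons x A : invw (x :: A) = invw A ++ [:: linv x].
Proof. by rewrite /invw /= rev_cons cats1. Qed.

Lemma foldr_cancel r W : redw r -> foldr fpush r (W ++ invw W) = r.
Proof.
elim: W r => [|x W IH] r Hr //=.
rewrite invw_cons catA foldr_cat /= IH ?fpush_red //.
by rewrite -{1}(linvK x) fpushK.
Qed.

Lemma norm_cancel A W B : norm (A ++ W ++ invw W ++ B) = norm (A ++ B).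
Proof.
rewrite norm_cat [in RHS]norm_cat; congr foldr.
by rewrite catA norm_cat foldr_cancel // norm_red.
Qed.

Lemma norm_cancel' A W B : norm (A ++ invw W ++ W ++ B) = norm (A ++ B).
Proof. by have := norm_cancel A (invw W) B; rewrite invwK. Qed.

Lemma norm_congr A B C D : norm A = norm B -> norm C = norm D ->
  norm (A ++ C) = norm (B ++ D).
Proof. by move=> H1 H2; rewrite -normCl H1 normCl -normCr H2 normCr. Qed.

Lemma norm_mid X Y Z : norm (X ++ Y ++ Z) = norm (X ++ norm Y ++ Z).
Proof. by rewrite -normCr -[in RHS]normCr normCl. Qed.

Lemma norm_inv A B : norm A = norm B -> norm (invw A) = norm (invw B).
Proof.
move=> H.
have := norm_cancel (invw A) B [::]; rewrite !cats0 => <-.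
rewrite norm_mid -H -norm_mid.
exact: (norm_cancel' [::] A (invw B)).
Qed.

End Free.

Section S3.
Variable n : nat.
Local Notation Lq := (Lequiv n).
Local Notation pi := (pi_word n).

Definition nfw (k c : nat) : seq nat :=
  match c with 0 => [::] | 1 => [:: k] | 2 => [:: k.+1] | 3 => [:: k; k.+1]
  | 4 => [:: k.+1; k] | _ => [:: k; k.+1; k] end.

Definition Aw k w := all (fun j => (j == k) || (j == k.+1)) w.

Variable k : nat.
Hypothesis hk : k.+2 < n.

Lemma sq_pre j v : j.+1 < n -> Lq [:: j, j & v] v.
Proof. by move=> hj; have := @Lequiv_sq n [::] v j hj. Qed.

Lemma braid0 v : Lq [:: k, k.+1, k & v] [:: k.+1, k, k.+1 & v].
Proof. by have := @Lequiv_braid n [::] v k hk. Qed.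

Lemma nf_step c j : c < 6 -> (j == k) || (j == k.+1) ->
  exists2 c', c' < 6 & Lq (j :: nfw k c) (nfw k c').
Proof.
have h1 : k.+1 < n := ltnW hk.
have h2 : k.+2 < n := hk.
move=> hc /orP[]/eqP->.
- case: c hc => [|[|[|[|[|[|c]]]]]] // _ /=.
  + by exists 1 => //; apply: Lequiv_refl.
  + by exists 0 => //; apply: sq_pre.
  + by exists 3 => //; apply: Lequiv_refl.
  + by exists 2 => //; apply: sq_pre.
  + by exists 5 => //; apply: Lequiv_refl.
  + by exists 4 => //; apply: sq_pre.
- case: c hc => [|[|[|[|[|[|c]]]]]] // _ /=.
  + by exists 2 => //; apply: Lequiv_refl.
  + by exists 4 => //; apply: Lequiv_refl.
  + by exists 0 => //; apply: sq_pre.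
  + by exists 5 => //; apply: Lequiv_sym; apply: braid0.
  + by exists 1 => //; apply: sq_pre.
  + exists 3 => //; apply: Lequiv_trans (_ : Lq [:: k.+1, k.+1, k, k.+1 & [::]] _).
      by have := Lq_catl [:: k.+1] (braid0 [::]).
    exact: sq_pre.
Qed.

Lemma nf_exists w : Aw k w -> exists2 c, c < 6 & Lq w (nfw k c).
Proof.
elim: w => [|j w IH] /=; first by exists 0 => //; apply: Lequiv_refl.
case/andP=> hj /IH [c hc Hc].
have [c' hc' Hc'] := nf_step hc hj.
exists c' => //; apply: Lequiv_trans Hc'.
exact: (Lq_catl [:: j] Hc).
Qed.

Let a : 'I_n := Ordinal (ltnW (ltnW hk)).
Let b : 'I_n := Ordinal (ltnW hk).
Let c3 : 'I_n := Ordinal hk.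

Lemma ta : adj_transp n k = tperm a b.
Proof. by rewrite (adj_transpE (ltnW hk)); congr tperm; apply: val_inj. Qed.
Lemma tb : adj_transp n k.+1 = tperm b c3.
Proof. by rewrite (adj_transpE hk); congr tperm; apply: val_inj. Qed.

Lemma nab : a != b. Proof. by rewrite -val_eqE /= neq_ltn ltnSn. Qed.
Lemma nbc : b != c3. Proof. by rewrite -val_eqE /= neq_ltn ltnSn. Qed.
Lemma nac : a != c3. Proof. by rewrite -val_eqE /= neq_ltn ltnW. Qed.

Definition sig6 (c : nat) : nat * nat :=
  match c with 0 => (k, k.+1) | 1 => (k.+1, k) | 2 => (k, k.+2) | 3 => (k.+2, k)
  | 4 => (k.+1, k.+2) | _ => (k.+2, k.+1) end.

Lemma nf_sig c : c < 6 -> (val (pi (nfw k c) a), val (pi (nfw k c) b)) = sig6 c.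
Proof.
have X1 := nab; have X2 := nbc; have X3 := nac.
have Y1 : b != a by rewrite eq_sym. have Y2 : c3 != b by rewrite eq_sym.
have Y3 : c3 != a by rewrite eq_sym.
case: c => [|[|[|[|[|[|c]]]]]] // _ /=;
  rewrite ?mulg1 ?ta ?tb ?permM ?perm1;
  do 3 rewrite ?tpermL ?tpermR ?(tpermD Y1 Y3) ?(tpermD X3 X2) //.
Qed.

Lemma nf_inj c c' : c < 6 -> c' < 6 -> pi (nfw k c) = pi (nfw k c') -> c = c'.
Proof.
move=> hc hc' E; have := nf_sig hc; rewrite E nf_sig // => {E}.
case: c hc => [|[|[|[|[|[|c]]]]]] //; case: c' hc' => [|[|[|[|[|[|c']]]]]] //= _ _;
  move=> E; have := f_equal fst E; have := f_equal snd E; rewrite /=; lia.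
Qed.

Lemma Aw_Lq u u' : Aw k u -> Aw k u' -> pi u = pi u' -> Lq u u'.
Proof.
move=> /nf_exists [c hc Hc] /nf_exists [c' hc' Hc'] E.
have E' : pi (nfw k c) = pi (nfw k c') by rewrite -(Lq_pi Hc) -(Lq_pi Hc').
have := nf_inj hc hc' E' => Ec; subst c'.
by apply: Lequiv_trans Hc (Lequiv_sym Hc').
Qed.

Lemma Aw_nfw c : Aw k (nfw k c).
Proof. by case: c => [|[|[|[|[|[|c]]]]]] //=; rewrite !eqxx ?orbT. Qed.

Lemma Aw_valid w : Aw k w -> valid_word n w.
Proof.
elim: w => //= j w IH /andP[/orP[]/eqP-> /IH->]; by rewrite ?(ltnW hk) ?hk.
Qed.

Definition S3set : {set 'S_n} := [set pi (nfw k (val c)) | c : 'I_6].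

Lemma S3set_word w : Aw k w -> pi w \in S3set.
Proof.
move=> /nf_exists [c hc Hc]; apply/imsetP; exists (Ordinal hc) => //.
exact: Lq_pi Hc.
Qed.

Definition nf (g : 'S_n) : seq nat :=
  nfw k (odflt 0 (omap val [pick c : 'I_6 | pi (nfw k (val c)) == g])).

Lemma nfP g : g \in S3set -> pi (nf g) = g.
Proof.
rewrite /nf; case: pickP => [c /eqP //|H /imsetP [c _ E]].
by have := H c; rewrite E eqxx.
Qed.

Lemma Aw_nf g : Aw k (nf g).
Proof. exact: Aw_nfw. Qed.

End S3.

Section Trace.
Variable n : nat.
Variable L : eqType.
Variable ed : nat -> 'S_n -> seq (L * bool).
Hypothesis Hed : forall k (s : 'S_n), ed k (s * adj_transp n k.+1)%g = ed k s.

Local Notation t := (adj_transp n).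
Local Notation pi := (pi_word n).

Definition col (s : 'S_n) m := flatten [seq ed i s | i <- iota 0 m].
Definition cc (s : 'S_n) j := col s j.-1 ++ invw (col (s * t j)%g j.-1).
Arguments cc : simpl never.
Fixpoint raw (s : 'S_n) (w : seq nat) : seq (L * bool) :=
  match w with [::] => [::] | j :: w' => cc s j ++ raw (s * t j)%g w' end.

Lemma col0 s : col s 0 = [::]. Proof. by []. Qed.
Lemma colS s m : col s m.+1 = col s m ++ ed m s.
Proof. by rewrite /col -addn1 iotaD map_cat flatten_cat /= cats0. Qed.

Lemma raw_cat s u v : raw s (u ++ v) = raw s u ++ raw (s * pi u)%g v.
Proof.
elim: u s => [|j u IH] s /=; first by rewrite mulg1.
by rewrite IH catA mulgA.
Qed.

Lemma cc_sq s j R : norm (cc s j ++ cc (s * t j)%g j ++ R) = norm R.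
Proof.
rewrite /cc -mulgA adj_transp_inv mulg1 -!catA.
rewrite norm_cancel'.
exact: (norm_cancel [::]).
Qed.

Lemma cc_braid s i R : i.+2 < n ->
  norm (cc s i ++ cc (s * t i)%g i.+1 ++ cc (s * t i * t i.+1)%g i ++ R) =
  norm (cc s i.+1 ++ cc (s * t i.+1)%g i ++ cc (s * t i.+1 * t i)%g i.+1 ++ R).
Proof.
move=> hi.
have Hb : (s * t i * t i.+1 * t i = s * t i.+1 * t i * t i.+1)%g.
  by rewrite -!mulgA; congr (_ * _)%g; rewrite !mulgA; exact: adj_transp_braid.
case: i hi Hb => [|m] hi Hb; first by rewrite /cc.
rewrite /cc /= !colS !invw_cat -!catA.
set b := (s * t m.+1 * t m.+2 * t m.+1)%g.
rewrite -Hb -/b.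
have E1 : ed m (s * t m.+1)%g = ed m s by apply: Hed.
have E2 : ed m (s * t m.+2 * t m.+1)%g = ed m (s * t m.+2)%g by apply: Hed.
have E3 : ed m b = ed m (s * t m.+1 * t m.+2)%g by rewrite /b; apply: Hed.
rewrite E1 E2.
rewrite (norm_cancel' (col s m) (col (s * t m.+1)%g m)).
have := norm_cancel' (col s m ++ ed m s ++ invw (ed m (s * t m.+1 * t m.+2)%g))
  (col (s * t m.+1 * t m.+2)%g m) (invw (col b m) ++ R); rewrite -!catA => ->.
have := norm_cancel' (col s m ++ ed m s ++ invw (ed m (s * t m.+2)%g))
  (col (s * t m.+2)%g m) (invw (col (s * t m.+2 * t m.+1)%g m) ++
    col (s * t m.+2 * t m.+1)%g m ++ ed m (s * t m.+2)%g ++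
    invw (ed m b) ++ invw (col b m) ++ R); rewrite -!catA => ->.
have := norm_cancel' (col s m ++ ed m s ++ invw (ed m (s * t m.+2)%g))
  (col (s * t m.+2 * t m.+1)%g m) (ed m (s * t m.+2)%g ++
    invw (ed m b) ++ invw (col b m) ++ R); rewrite -!catA => ->.
have := norm_cancel' (col s m ++ ed m s) (ed m (s * t m.+2)%g)
  (invw (ed m b) ++ invw (col b m) ++ R); rewrite -!catA => ->.
by rewrite E3.
Qed.

Lemma raw_cons s j w : raw s (j :: w) = cc s j ++ raw (s * t j)%g w.
Proof. by []. Qed.
Lemma raw_nil s : raw s [::] = [::].
Proof. by []. Qed.

Lemma raw_Lq u v : Lequiv n u v -> forall s, norm (raw s u) = norm (raw s v).
Proof.
elim=> {u v} [//|u v _ IH|u v w _ IH1 _ IH2|u v j hj|u v i hi] s.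
- by rewrite IH.
- by rewrite IH1 IH2.
- rewrite !raw_cat; apply: norm_congr => //.
  rewrite !raw_cons raw_nil cats0 -catA cc_sq; congr (norm (raw _ v)).
  by rewrite /= mulg1 adj_transp_inv mulg1.
- rewrite !raw_cat; apply: norm_congr => //.
  rewrite !raw_cons raw_nil !cats0 -!(catA (cc _ _)) cc_braid //.
  congr (norm (_ ++ _ ++ _ ++ raw _ v)).
  rewrite /= !mulg1; congr (_ * _)%g; rewrite !mulgA; exact: adj_transp_braid.
Qed.

Lemma cc_A s k j : (j == k) || (j == k.+1) ->
  norm (cc s j) = norm (col s k ++ invw (col (s * t j)%g k)).
Proof.
case/orP=> /eqP ->; last by [].
case: k => [|m] //.
rewrite /cc /= !colS invw_cat -catA.
have -> : ed m (s * t m.+1)%g = ed m s by apply: Hed.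
by have := norm_cancel (col s m) (ed m s) (invw (col (s * t m.+1)%g m)).
Qed.

Lemma raw_A s k u : Aw k u ->
  norm (raw s u) = norm (col s k ++ invw (col (s * pi u)%g k)).
Proof.
elim: u s => [|j u IH] s /=.
  by move=> _; rewrite mulg1 /raw; have := norm_cancel [::] (col s k) [::]; rewrite /= cats0.
case/andP=> hj hu.
rewrite (norm_congr (cc_A s hj) (IH _ hu)) -!catA mulgA.
exact: norm_cancel'.
Qed.

End Trace.

Section Graph.
Variable n : nat.
Hypothesis hn : 4 <= n.
Local Notation Lq := (Lequiv n).
Local Notation pi := (pi_word n).
Local Notation t := (adj_transp n).

Definition V := ('I_n.+1 * {set 'S_n})%type.
Definition vtx (k : nat) (s : 'S_n) : V := (inord k, mulg s @: S3set n k).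
Definition v0 := vtx 0 1.

Lemma Aw_cat k u v : Aw k (u ++ v) = Aw k u && Aw k v.
Proof. by rewrite /Aw all_cat. Qed.
Lemma Aw_rev k u : Aw k (rev u) = Aw k u.
Proof. by rewrite /Aw all_rev. Qed.

Lemma S3set1 k : 1%g \in S3set n k.
Proof. by apply/imsetP; exists ord0. Qed.

Lemma S3set_mul k u g : k.+2 < n -> Aw k u -> g \in S3set n k -> (pi u * g)%g \in S3set n k.
Proof.
move=> hk hu /imsetP [c _ ->]; rewrite -pi_cat; apply: S3set_word => //.
by rewrite Aw_cat hu Aw_nfw.
Qed.

Lemma vtype_vtx k s : k <= n -> val (vtx k s).1 = k.
Proof. by move=> hk; rewrite /= inordK. Qed.

Lemma vtx_eq k s s' : vtx k s = vtx k s' -> (s^-1 * s')%g \in S3set n k.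
Proof.
case=> E; have : s' \in mulg s' @: S3set n k.
  by apply/imsetP; exists 1%g; rewrite ?S3set1 ?mulg1.
by rewrite -E => /imsetP [g Hg ->]; rewrite mulKg.
Qed.

Lemma vtx_A k s u : k.+2 < n -> Aw k u -> vtx k (s * pi u)%g = vtx k s.
Proof.
move=> hk hu; congr pair; apply/setP => x.
apply/imsetP/imsetP => [[g Hg ->]|[g Hg ->]].
- by exists (pi u * g)%g; [apply: S3set_mul | rewrite mulgA].
- exists (pi (rev u) * g)%g; first by apply: S3set_mul => //; rewrite Aw_rev.
  by rewrite pi_rev -mulgA mulKVg.
Qed.

Lemma vtx_eq2 k s s' : k.+2 < n -> (s^-1 * s')%g \in S3set n k -> vtx k s = vtx k s'.
Proof.
move=> hk /imsetP [c _ E].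
by rewrite -[s'](mulKVg s) E vtx_A // Aw_nfw.
Qed.

Fixpoint Rset (m : nat) : {set V} :=
  if m is m'.+1 then Rset m' :|: [set v | [exists k : 'I_n, exists d : 'S_n,
     (k.+4 <= n) && (((vtx k d \in Rset m') && (v == vtx k.+1 d)) ||
                     ((vtx k.+1 d \in Rset m') && (v == vtx k d)))]]
  else [set v0].

Definition reach v := exists m, v \in Rset m.

Definition rank v : nat :=
  match excluded_middle_informative (reach v) with
  | left H => ex_minn H
  | right _ => 0
  end.

Lemma rank_spec v : reach v -> v \in Rset (rank v) /\ forall m, v \in Rset m -> rank v <= m.
Proof.
rewrite /rank => H; case: excluded_middle_informative => // H'.
by case: ex_minnP.
Qed.

Lemma Rset_mono m m' : m <= m' -> Rset m \subset Rset m'.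
Proof.
move/subnKC <-; elim: (m' - m) => [|k IH]; first by rewrite addn0.
by apply: subset_trans IH _; rewrite addnS /= subsetUl.
Qed.

Lemma reach_step k d : k.+4 <= n ->
  (reach (vtx k d) -> reach (vtx k.+1 d) /\ rank (vtx k.+1 d) <= (rank (vtx k d)).+1) /\
  (reach (vtx k.+1 d) -> reach (vtx k d) /\ rank (vtx k d) <= (rank (vtx k.+1 d)).+1).
Proof.
move=> hk; have hk' : k < n by lia.
split=> H; have [H1 _] := rank_spec H.
- have H2 : vtx k.+1 d \in Rset (rank (vtx k d)).+1.
    rewrite /= inE; apply/orP; right; rewrite inE.
    by apply/existsP; exists (Ordinal hk'); apply/existsP; exists d; rewrite /= hk H1 eqxx.
  have R2 : reach (vtx k.+1 d) by exists (rank (vtx k d)).+1.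
  by split => //; case: (rank_spec R2) => _; apply.
- have H2 : vtx k d \in Rset (rank (vtx k.+1 d)).+1.
    rewrite /= inE; apply/orP; right; rewrite inE.
    by apply/existsP; exists (Ordinal hk'); apply/existsP; exists d; rewrite /= hk H1 eqxx orbT.
  have R2 : reach (vtx k d) by exists (rank (vtx k.+1 d)).+1.
  by split => //; case: (rank_spec R2) => _; apply.
Qed.

Lemma reach_v0 : reach v0.
Proof. by exists 0; rewrite /= inE. Qed.

Definition PP (v : V) (p : nat * 'S_n * bool) : Prop :=
  let: (k, d, up) := p in k.+4 <= n /\
   if up then v = vtx k.+1 d /\ reach (vtx k d) /\ rank (vtx k d) < rank v
   else v = vtx k d /\ reach (vtx k.+1 d) /\ rank (vtx k.+1 d) < rank v.

Definition par v : nat * 'S_n * bool :=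
  match excluded_middle_informative (exists p, PP v p) with
  | left H => proj1_sig (constructive_indefinite_description _ H)
  | right _ => (0, 1%g, true)
  end.

Lemma parP v : reach v -> v <> v0 -> PP v (par v).
Proof.
move=> Hv Hv0; rewrite /par; case: excluded_middle_informative => [H|H].
  by case: constructive_indefinite_description.
exfalso; apply: H.
have [H1 H2] := rank_spec Hv.
case E: (rank v) H1 H2 => [|m] H1 H2.
  by move: H1; rewrite /= inE => /eqP.
have Hm : v \notin Rset m.
  by apply/negP => /H2; rewrite ltnn.
move: H1; rewrite /= inE (negbTE Hm) /= inE => /existsP [k /existsP [d]].
case/andP=> hk /orP [] /andP [Hd /eqP Hvd].
- exists (val k, d, true); split => //; split => //; split; first by exists m.
  by rewrite E ltnS; case: (rank_spec (ex_intro _ m Hd)) => _; apply.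
- exists (val k, d, false); split => //; split => //; split; first by exists m.
  by rewrite E ltnS; case: (rank_spec (ex_intro _ m Hd)) => _; apply.
Qed.

Definition ptype (p : nat * 'S_n * bool) := let: (k, _, up) := p in if up then k else k.+1.
Definition pvert (v : V) := vtx (ptype (par v)) (par v).1.2.

Lemma pvert_reach v : reach v -> v <> v0 -> reach (pvert v) /\ rank (pvert v) < rank v.
Proof.
move=> H1 H2; have := parP H1 H2; rewrite /pvert.
by case: (par v) => [[k d] []] /= [_ [_ [H3 H4]]].
Qed.

Definition Qf (r : seq nat) (s : 'S_n) (k : nat) := r ++ nf k ((pi r)^-1 * s)%g.

Fixpoint Rf m v : seq nat :=
  if m is m'.+1 then (if v == v0 then [::]
                      else Qf (Rf m' (pvert v)) (par v).1.2 (ptype (par v)))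
  else [::].

Definition R v := Rf (rank v).+1 v.

Lemma Rf_stable m m' v : reach v -> rank v < m -> rank v < m' -> Rf m v = Rf m' v.
Proof.
elim: m m' v => [|m IH] [|m'] v // Hv H1 H2 /=.
case: eqP => // /eqP Hv0.
have [P1 P2] := pvert_reach Hv (elimN eqP Hv0).
by rewrite (IH m') //; lia.
Qed.

Lemma R_unfold v : reach v ->
  R v = if v == v0 then [::] else Qf (R (pvert v)) (par v).1.2 (ptype (par v)).
Proof.
move=> Hv; rewrite /R /=; case: eqP => // /eqP Hv0.
have [P1 P2] := pvert_reach Hv (elimN eqP Hv0).
by rewrite (@Rf_stable (rank v) (rank (pvert v)).+1 (pvert v) P1).
Qed.

Lemma Qf_pi r s k : k.+2 < n -> vtx k (pi r) = vtx k s -> pi (Qf r s k) = s.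
Proof.
move=> hk E; rewrite /Qf pi_cat nfP ?mulKVg //.
exact: vtx_eq.
Qed.

Lemma Qf_valid r s k : k.+2 < n -> valid_word n r -> valid_word n (Qf r s k).
Proof.
by move=> hk hr; rewrite /Qf valid_cat hr; apply: (Aw_valid hk); apply: Aw_nf.
Qed.

Definition vtype (v : V) := val v.1.

Lemma R_inv v : reach v ->
  [/\ (vtype v).+3 <= n, vtx (vtype v) (pi (R v)) = v & valid_word n (R v)].
Proof.
move=> Hv; move: {2}(rank v).+1 (ltnSn (rank v)) => m.
elim: m v Hv => [|m IH] v Hv Hm //.
rewrite R_unfold //; case: eqP => [->|/eqP Hv0].
  by rewrite /v0 /vtype vtype_vtx //; split => //; lia.
have HP := parP Hv (elimN eqP Hv0).
have [P1 P2] := pvert_reach Hv (elimN eqP Hv0).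
have [Q1 Q2 Q3] := IH _ P1 (leq_trans P2 (ltnSE Hm)).
move: HP P1 P2 Q1 Q2 Q3; rewrite /pvert.
case: (par v) => [[k d] []] /= [hk [-> _]] P1 P2.
- have hk1 : k <= n by lia.
  have hk2 : k.+1 <= n by lia.
  rewrite /vtype !vtype_vtx //.
  move=> Q1 Q2 Q3; split; first by lia.
    by rewrite Qf_pi //; lia.
  by apply: Qf_valid => //; lia.
- have hk1 : k <= n by lia.
  have hk2 : k.+1 <= n by lia.
  rewrite /vtype !vtype_vtx //.
  move=> Q1 Q2 Q3; split; first by lia.
    by rewrite Qf_pi //; lia.
  by apply: Qf_valid => //; lia.
Qed.

End Graph.

Lemma norm_cat_nil (L : eqType) (A B : seq (L * bool)) :
  norm (A ++ B) = [::] -> norm B = norm (invw A).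
Proof.
move=> H; have := norm_cancel' [::] A B; rewrite /= => <-.
by rewrite -normCr H cats0.
Qed.

Lemma Lq_rev n u v : Lequiv n u v -> Lequiv n (rev u) (rev v).
Proof.
elim=> {u v} [w|u v _ IH|u v w _ IH1 _ IH2|u v j hj|u v i hi].
- exact: Lequiv_refl.
- exact: Lequiv_sym.
- exact: Lequiv_trans IH1 IH2.
- by rewrite !rev_cat; have := @Lequiv_sq n (rev v) (rev u) j hj; rewrite -!catA.
- by rewrite !rev_cat; have := @Lequiv_braid n (rev v) (rev u) i hi; rewrite -!catA.
Qed.

Section Main.
Variable n : nat.
Hypothesis hn : 4 <= n.
Local Notation Lq := (Lequiv n).
Local Notation pi := (pi_word n).
Local Notation t := (adj_transp n).
Local Notation reach := (@reach n).
Local Notation vtx := (@vtx n).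
Local Notation R := (@R n).
Local Notation v0 := (v0 n).

Local Notation Ed := (prod (ordinal n.+1) {set {perm (ordinal n)}}).
Definition edg k (s : 'S_n) : Ed := (inord k, [set s; (s * t k.+1)%g]).
Definition treeE (e : Ed) : Prop :=
  exists v, reach v /\ v <> v0 /\ e = edg (par v).1.1 (par v).1.2.
Definition goodNT (e : Ed) : Prop :=
  exists k d, k.+4 <= n /\ e = edg k d /\ reach (vtx k d) /\ ~ treeE e.
Definition asb (P : Prop) : bool := if excluded_middle_informative P then true else false.
Lemma asbP (P : Prop) : reflect P (asb P).
Proof. by rewrite /asb; case: excluded_middle_informative => H; constructor. Qed.

Definition ENon : seq Ed := [seq e <- enum {: Ed} | asb (goodNT e)].
Definition K := size ENon.
Definition lab (e : Ed) : seq ('I_K * bool) :=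
  if insub (index e ENon) is Some i then [:: (i, true)] else [::].
Definition ed k (s : 'S_n) := lab (edg k s).

Lemma Hed k (s : 'S_n) : ed k (s * t k.+1)%g = ed k s.
Proof.
rewrite /ed /edg -mulgA adj_transp_inv mulg1; congr (lab (_, _)).
by rewrite setUC.
Qed.

Lemma ENon_uniq : uniq ENon.
Proof. by rewrite filter_uniq // enum_uniq. Qed.

Lemma lab_nil e : e \notin ENon -> lab e = [::].
Proof.
move=> He; rewrite /lab; case: insubP => // i; rewrite -/K => Hi.
by rewrite /K index_mem (negbTE He) in Hi.
Qed.

Lemma lab_nth (i : 'I_K) e0 : lab (nth e0 ENon i) = [:: (i, true)].
Proof.
rewrite /lab index_uniq ?ENon_uniq //.
by rewrite (insubT (fun m => m < K) (ltn_ord i)); congr [:: (_, _)]; apply: val_inj.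
Qed.

Lemma tree_lab e : treeE e -> lab e = [::].
Proof.
move=> He; apply: lab_nil; rewrite mem_filter; apply/negP => /andP [/asbP [k [d [_ [_ [_ H]]]]] _].
exact: H.
Qed.

Definition Q (s : 'S_n) k := Qf (R (vtx k s)) s k.
Definition colstep s k := Q s k ++ rev (Q s k.+1).

Local Notation Phi s w := (norm (raw ed s w)).

Lemma inord_inj k k' : k <= n -> k' <= n -> inord k = inord k' :> 'I_n.+1 -> k = k'.
Proof. by move=> h1 h2 E; rewrite -(@inordK n k) -1?(@inordK n k') ?E. Qed.

Lemma norm_congrl (L : eqType) (A B C : seq (L * bool)) :
  norm B = norm C -> norm (A ++ B) = norm (A ++ C).
Proof. by move=> H; rewrite -normCr H normCr. Qed.

Lemma raw_Qf r s k : k.+2 < n -> vtx k (pi r) = vtx k s ->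
  Phi 1%g (Qf r s k) = norm (raw ed 1 r ++ col ed (pi r) k ++ invw (col ed s k)).
Proof.
move=> hk E; rewrite /Qf raw_cat mul1g; apply: norm_congrl.
rewrite (raw_A (@Hed) _ (Aw_nf _ _)) -pi_cat.
by rewrite (Qf_pi hk E).
Qed.
Lemma norm_nil_l (L : eqType) (X Y : seq (L * bool)) : norm X = [::] -> norm (X ++ Y) = norm Y.
Proof. by move=> H; rewrite -normCl H. Qed.

Lemma H_tree v : reach v -> norm (raw ed 1 (R v) ++ col ed (pi (R v)) (vtype v)) = [::].
Proof.
move=> Hv; move: {2}(rank v).+1 (ltnSn (rank v)) => m.
elim: m v Hv => [|m IH] v Hv Hm //.
have [I1 I2 I3] := R_inv hn Hv.
move: I1 I2 I3; rewrite R_unfold //; case: eqP => [-> _ _ _|/eqP Hv0].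
  by rewrite /vtype vtype_vtx.
have HP := parP Hv (elimN eqP Hv0).
have [P1 P2] := pvert_reach Hv (elimN eqP Hv0).
have IHp := IH _ P1 (leq_trans P2 (ltnSE Hm)).
have [J1 J2 J3] := R_inv hn P1.
have Htr : treeE (edg (par v).1.1 (par v).1.2).
  by exists v; split => //; split => //; apply/eqP.
move: HP P1 P2 IHp J1 J2 J3 Htr; rewrite /pvert.
case: (par v) => [[k d] []] /= [hk [Ev _]] P1 P2.
- have hk1 : k <= n by lia.
  have hk2 : k.+1 <= n by lia.
  rewrite Ev /vtype !vtype_vtx // => IHp J1 J2 J3 Htr I1 I2 I3.
  have Hpi : pi (Qf (R (vtx k d)) d k) = d by apply: Qf_pi => //; lia.
  rewrite Hpi -normCl (raw_Qf _ J2); last by lia.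
  rewrite normCl catA -catA (norm_nil_l _ IHp) colS.
  rewrite (norm_cancel' [::] (col ed d k) (ed k d)) /=.
  by rewrite /ed (tree_lab Htr).
- have hk1 : k <= n by lia.
  have hk2 : k.+1 <= n by lia.
  rewrite Ev /vtype !vtype_vtx // => IHp J1 J2 J3 Htr I1 I2 I3.
  have Hpi : pi (Qf (R (vtx k.+1 d)) d k.+1) = d by apply: Qf_pi => //; lia.
  rewrite Hpi -normCl (raw_Qf _ J2); last by lia.
  rewrite normCl catA -catA (norm_nil_l _ IHp) colS invw_cat -catA.
  have := norm_cancel' (invw (ed k d)) (col ed d k) [::]; rewrite !cats0 => ->.
  by rewrite /ed (tree_lab Htr).
Qed.

Lemma Q_inv s k : k.+3 <= n -> reach (vtx k s) ->
  [/\ vtx k (pi (R (vtx k s))) = vtx k s, pi (Q s k) = s & valid_word n (Q s k)].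
Proof.
move=> hk Hr; have [I1 I2 I3] := R_inv hn Hr.
have hk' : k <= n by lia.
move: I1 I2; rewrite /vtype vtype_vtx // => I1 I2.
split => //; first by apply: Qf_pi => //.
by apply: Qf_valid.
Qed.

Lemma Q_raw s k : k.+3 <= n -> reach (vtx k s) -> Phi 1%g (Q s k) = norm (invw (col ed s k)).
Proof.
move=> hk Hr; have [I1 _ _] := Q_inv hk Hr.
have := H_tree Hr; rewrite /vtype vtype_vtx; last by lia.
move=> HT; rewrite /Q (raw_Qf _ I1) // catA.
exact: norm_nil_l HT.
Qed.

Lemma raw_revPL w : valid_word n w -> Phi (pi w) (rev w) = norm (invw (raw ed 1 w)).
Proof.
move=> hw; have := raw_Lq (@Hed) (Lq_revK hw) 1.
rewrite raw_cat mul1g => H; exact: norm_cat_nil H.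
Qed.

Lemma colstep_raw s k : k.+4 <= n -> reach (vtx k s) -> Phi 1%g (colstep s k) = norm (ed k s).
Proof.
move=> hk Hr; have [Hr' _] := (reach_step hn s hk).1 Hr.
have hk3 : k.+3 <= n by lia.
have [_ P1 V1] := Q_inv hk3 Hr.
have [_ P2 V2] := Q_inv hk Hr'.
have E := raw_revPL V2; rewrite P2 in E.
rewrite /colstep raw_cat mul1g P1 -normCr E normCr.
rewrite -normCl Q_raw // normCl -normCr (norm_inv (Q_raw hk Hr')) invwK normCr colS.
exact: (norm_cancel' [::]).
Qed.

Definition e0 : Ed := (ord0, set0).
Definition kdP_ (i : 'I_K) (p : nat * 'S_n) : Prop :=
  [/\ p.1.+4 <= n, nth e0 ENon i = edg p.1 p.2 & reach (vtx p.1 p.2)].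
Definition kd (i : 'I_K) : nat * 'S_n :=
  match excluded_middle_informative (exists p, kdP_ i p) with
  | left H => proj1_sig (constructive_indefinite_description _ H)
  | right _ => (0, 1%g)
  end.

Lemma kdP i : kdP_ i (kd i).
Proof.
rewrite /kd; case: excluded_middle_informative => [H|H].
  by case: constructive_indefinite_description.
exfalso; apply: H.
have := mem_nth e0 (ltn_ord i); rewrite mem_filter => /andP [/asbP [k [d [H1 [H2 [H3 _]]]]] _].
by exists (k, d).
Qed.

Definition b (i : 'I_K) : seq nat := colstep (kd i).2 (kd i).1.

Lemma Phi_b i : Phi 1%g (b i) = [:: (i, true)].
Proof.
have [H1 H2 H3] := kdP i.
by rewrite /b colstep_raw // /ed -H2 lab_nth.
Qed.

Lemma b_PL i : in_PL n (b i).
Proof.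
have [H1 H2 H3] := kdP i.
have [Hr' _] := (reach_step hn (kd i).2 H1).1 H3.
have hk3 : (kd i).1.+3 <= n by lia.
have [_ P1 V1] := Q_inv hk3 H3.
have [_ P2 V2] := Q_inv H1 Hr'.
split; first by rewrite /b /colstep valid_cat valid_rev V1 V2.
by rewrite /b /colstep pi_cat pi_rev P1 P2 mulgV.
Qed.

Lemma reduced_redw k (f : seq ('I_k * bool)) : reduced f = redw f.
Proof. by elim: f => //= x f IH; case: f IH => //= y f ->. Qed.

Lemma Phi_eval f : Phi 1%g (eval_free b f) = norm f.
Proof.
elim: f => [|[i s] f IH] //.
have -> : eval_free b ((i, s) :: f) = (if s then b i else rev (b i)) ++ eval_free b f by [].
have [_ Hp] := b_PL i.
have Hpc : pi (if s then b i else rev (b i)) = 1%g by case: s; rewrite ?pi_rev Hp ?invg1.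
rewrite raw_cat Hpc mulg1 -cat1s.
apply: norm_congr => //.
case: s {Hpc}; first by rewrite Phi_b.
have [Hv _] := b_PL i.
have := raw_revPL Hv; rewrite Hp => ->.
by rewrite (@norm_inv _ _ [:: (i, true)]) // Phi_b.
Qed.

Lemma b_inj f : reduced f -> Lq (eval_free b f) [::] -> f = [::].
Proof.
move=> Hf H; have := raw_Lq (@Hed) H 1; rewrite Phi_eval => E.
by rewrite -(norm_id (w:=f)) ?E // -reduced_redw.
Qed.

Definition Gen w := exists f, Lq w (eval_free b f).

Lemma eval_cat f g : eval_free b (f ++ g) = eval_free b f ++ eval_free b g.
Proof. by rewrite /eval_free map_cat flatten_cat. Qed.

Lemma Gen_nil : Gen [::].
Proof. by exists [::]; apply: Lequiv_refl. Qed.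

Lemma Gen_cat u v : Gen u -> Gen v -> Gen (u ++ v).
Proof. by move=> [f Hf] [g Hg]; exists (f ++ g); rewrite eval_cat; apply: Lq_cat. Qed.

Lemma Gen_Lq u v : Lq u v -> Gen v -> Gen u.
Proof. by move=> H [f Hf]; exists f; apply: Lequiv_trans H Hf. Qed.

Lemma eval_rev f : eval_free b (rev (map (fun x => (x.1, ~~ x.2)) f)) = rev (eval_free b f).
Proof.
elim: f => [|[i s] f IH] //.
rewrite /= rev_cons -cats1 eval_cat IH.
have -> : eval_free b ((i, s) :: f) = (if s then b i else rev (b i)) ++ eval_free b f by [].
rewrite rev_cat; congr (_ ++ _); rewrite /eval_free /= cats0.
by case: s; rewrite ?revK.
Qed.

Lemma Gen_rev u : Gen u -> Gen (rev u).
Proof.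
move=> [f Hf]; exists (rev (map (fun x => (x.1, ~~ x.2)) f)).
by rewrite eval_rev; apply: Lq_rev.
Qed.

Lemma Gen_b i : Gen (b i).
Proof. by exists [:: (i, true)]; rewrite /eval_free /= cats0; apply: Lequiv_refl. Qed.

Lemma reach_all s k : reach (vtx 0 s) -> k.+3 <= n -> reach (vtx k s).
Proof.
move=> H; elim: k => // k IH hk.
by apply: ((reach_step hn s hk).1 (IH (ltnW hk))).1.
Qed.

Lemma reach_0 s k : k.+3 <= n -> reach (vtx k s) -> reach (vtx 0 s).
Proof.
elim: k => // k IH hk H.
apply: IH; first by lia.
exact: ((reach_step hn s hk).2 H).1.
Qed.

Lemma Aw_jm j : Aw j.-1 [:: j].
Proof. by case: j => [|j] //=; rewrite eqxx ?orbT. Qed.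

Lemma reach_pi w : valid_word n w -> reach (vtx 0 (pi w)).
Proof.
elim/last_ind: w => [_|w j IH]; first exact: reach_v0.
rewrite -cats1 valid_cat => /andP [hw]; rewrite /valid_word /= andbT => hj.
have hm : (j.-1).+3 <= n by lia.
have := reach_all (IH hw) hm.
rewrite -(vtx_A (pi w) _ (Aw_jm j)); last by lia.
rewrite -pi_cat; exact: reach_0.
Qed.

Lemma Qf_Lq r s k u : k.+2 < n -> vtx k (pi r) = vtx k s -> Aw k u ->
  Lq (Qf r (s * pi u) k) (Qf r s k ++ u).
Proof.
move=> hk E hu; rewrite /Qf -catA; apply: Lq_catl.
have Hg := vtx_eq E.
have Hg2 : ((pi r)^-1 * (s * pi u))%g \in S3set n k.
  have /imsetP [c _ Ec] := Hg.
  by rewrite mulgA Ec -pi_cat; apply: (S3set_word hk); rewrite Aw_cat Aw_nfw hu.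
apply: (Aw_Lq hk); rewrite ?Aw_cat ?Aw_nf ?hu //.
by rewrite pi_cat !nfP // mulgA.
Qed.

Lemma Q_shift s k u : k.+3 <= n -> reach (vtx k s) -> Aw k u ->
  Lq (Q (s * pi u) k) (Q s k ++ u).
Proof.
move=> hk Hr hu; have [I1 _ _] := Q_inv hk Hr.
rewrite /Q (vtx_A s hk hu); exact: Qf_Lq.
Qed.

Lemma Qf_self r s k : k.+2 < n -> pi r = s -> Lq (Qf r s k) r.
Proof.
move=> hk E; rewrite /Qf -[X in Lq _ X]cats0; apply: Lq_catl.
apply: (Aw_Lq hk) => //; first exact: Aw_nf.
by rewrite nfP -E ?mulVg ?S3set1.
Qed.

Lemma colstep_shift s k : k.+4 <= n -> reach (vtx k s) ->
  Lq (colstep (s * t k.+1)%g k) (colstep s k).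
Proof.
move=> hk Hr; have [Hr' _] := (reach_step hn s hk).1 Hr.
have hk3 : k.+3 <= n by lia.
have A1 : Aw k [:: k.+1] by rewrite /Aw /= eqxx orbT.
have A2 : Aw k.+1 [:: k.+1] by rewrite /Aw /= eqxx.
have H1 := Q_shift hk3 Hr A1; have H2 := Q_shift hk Hr' A2.
rewrite /= mulg1 in H1 H2.
have [_ _ V2] := Q_inv hk Hr'.
rewrite /colstep; apply: Lequiv_trans (Lq_cat H1 (Lq_rev H2)) _.
rewrite rev_cat /= -catA; apply: Lq_catl.
exact: (sq_pre _ (ltnW hk)).
Qed.

Lemma edge_eq k k' s d : k.+4 <= n -> k'.+4 <= n -> edg k s = edg k' d ->
  k = k' /\ (s = d \/ s = (d * t k.+1)%g).
Proof.
move=> hk hk' [E1 E2].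
have Ek : k = k' by apply: inord_inj => //; lia.
subst k'; split => //.
have : s \in [set s; (s * t k.+1)%g] by rewrite !inE eqxx.
by rewrite E2 !inE => /orP [] /eqP ->; [left|right].
Qed.

Lemma colstep_tree s k : k.+4 <= n -> reach (vtx k s) -> treeE (edg k s) ->
  Lq (colstep s k) [::].
Proof.
move=> hk Hr [v [Hv [Hv0 Ee]]].
have HP := parP Hv Hv0.
have RU := R_unfold hn Hv.
have [I1 I2 I3] := R_inv hn Hv.
move: HP RU I1 I2 I3 Ee; rewrite /pvert.
case: (par v) => [[k' d] up] /= [hk' HH] RU I1 I2 I3 Ee.
move: HH.
have [Ek Es] := edge_eq hk hk' Ee; subst k'.
move/eqP: Hv0 => Hv0; rewrite (negbTE Hv0) in RU.
have hk3 : k.+3 <= n by lia.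
have fin : reach (vtx k d) -> Lq (colstep d k) [::] -> Lq (colstep s k) [::].
  move=> Hd Hc; case: Es => ->; first exact: Hc.
  by apply: Lequiv_trans Hc; apply: colstep_shift.
case: up RU => RU [Ev [H' _]]; rewrite /= in RU.
- have Hd := H'; refine (fin Hd _); rewrite /colstep /Q -Ev -RU.
  have Hp : pi (R v) = d.
    rewrite RU; apply: Qf_pi; first by lia.
    by have [J1 _ _] := Q_inv hk3 Hd.
  apply: Lequiv_trans (Lq_catl _ (Lq_rev (Qf_self _ Hp))) _; first by lia.
  exact: Lq_revK.
- have Hd' := H'; have Hd : reach (vtx k d) by rewrite -Ev.
  refine (fin Hd _); rewrite /colstep /Q -Ev -RU.
  have Hp : pi (R v) = d.
    rewrite RU; apply: Qf_pi; first by lia.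
    by have [J1 _ _] := Q_inv hk Hd'.
  apply: Lequiv_trans (Lq_catr _ (Qf_self _ Hp)) _; first by lia.
  exact: Lq_revK.
Qed.

Lemma Gen_colstep s k : k.+4 <= n -> reach (vtx k s) -> Gen (colstep s k).
Proof.
move=> hk Hr.
case: (excluded_middle_informative (treeE (edg k s))) => Ht.
  by apply: Gen_Lq (colstep_tree hk Hr Ht) Gen_nil.
have Hin : edg k s \in ENon.
  rewrite mem_filter mem_enum andbT; apply/asbP.
  by exists k, s; split => //; split.
have HiK : index (edg k s) ENon < K by rewrite /K index_mem.
pose i : 'I_K := Ordinal HiK.
have Hi : nth e0 ENon i = edg k s.
  by rewrite /= nth_index.
have [K1 K2 K3] := kdP i.
have [Ek Es] := edge_eq hk K1 (etrans (esym Hi) K2).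
apply: Gen_Lq (Gen_b i); rewrite /b -Ek.
case: Es => ->; first exact: Lequiv_refl.
by apply: colstep_shift => //; rewrite Ek.
Qed.

Lemma Gen_col s k k' : reach (vtx 0 s) -> k <= k' -> k'.+3 <= n ->
  Gen (Q s k ++ rev (Q s k')).
Proof.
move=> Hr hkk'; elim: k' hkk' => [|k' IH] hkk' hk'.
  rewrite leqn0 in hkk'; move/eqP: hkk' => ->.
  have [_ _ V] := Q_inv hk' (reach_all Hr hk').
  exact: Gen_Lq (Lq_revK V) Gen_nil.
case: (ltngtP k k'.+1) hkk' => // [hlt|->] _; last first.
  have [_ _ V] := Q_inv hk' (reach_all Hr hk').
  exact: Gen_Lq (Lq_revK V) Gen_nil.
have hk'' : k'.+3 <= n by lia.
have [_ _ V] := Q_inv hk'' (reach_all Hr hk'').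
apply: Gen_Lq (_ : Lq _ ((Q s k ++ rev (Q s k')) ++ colstep s k')) _.
  have Lk := Lq_Krev V; rewrite /colstep.
  move: (Q s k) (Q s k') (Q s k'.+1) Lk => A B C Lk.
  rewrite -!catA; apply: Lq_catl; apply: Lequiv_sym.
  by have := Lq_catr (rev C) Lk; rewrite -catA.
apply: Gen_cat; first by apply: IH => //; lia.
by apply: Gen_colstep => //; apply: reach_all.
Qed.

Lemma Gen_local s j : reach (vtx 0 s) -> j.+1 < n ->
  Gen (Q s 0 ++ [:: j] ++ rev (Q (s * t j)%g 0)).
Proof.
move=> Hr hj.
have hm : (j.-1).+3 <= n by lia.
have Hrm := reach_all Hr hm.
have Hsh := Q_shift hm Hrm (Aw_jm j); rewrite /= mulg1 in Hsh.
have Hr' : reach (vtx 0 (s * t j)%g).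
  have hm2 : (j.-1).+2 < n by lia.
  have E := vtx_A s hm2 (Aw_jm j); rewrite /= mulg1 in E.
  by apply: (reach_0 hm); rewrite E.
have G1 := Gen_col Hr (leq0n j.-1) hm.
have G3 := Gen_rev (Gen_col Hr' (leq0n j.-1) hm).
rewrite rev_cat revK in G3.
have [_ _ V] := Q_inv hm Hrm.
apply: Gen_Lq (Gen_cat G1 G3).
move: Hsh V; move: (Q s 0) (Q s j.-1) (Q (s * t j)%g j.-1) (Q (s * t j)%g 0) => A B C D Hsh V.
rewrite -!catA; apply: Lq_catl.
apply: Lequiv_trans (_ : Lq _ (rev B ++ (B ++ [:: j]) ++ rev D)) _.
  rewrite !catA; apply: Lequiv_sym; apply: Lq_catr.
  by have := Lq_catr [:: j] (Lq_Krev V).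
apply: Lq_catl; apply: Lq_catr; exact: Lequiv_sym Hsh.
Qed.

Lemma R_v0 : R (vtx 0 1) = [::].
Proof. by have := R_unfold hn (reach_v0 n); rewrite eqxx => <-. Qed.

Lemma surj_aux w : valid_word n w -> exists f, Lq w (eval_free b f ++ Q (pi w) 0).
Proof.
elim/last_ind: w => [_|w j IH].
  exists [::]; rewrite /= /Q R_v0.
  apply: Lequiv_sym; apply: (Qf_self (k:=0)) => //; lia.
rewrite -cats1 valid_cat => /andP [hw]; rewrite /valid_word /= andbT => hj.
have [f Hf] := IH hw.
have Hr := reach_pi hw.
have [g Hg] := Gen_local Hr hj.
have hz : 0.+3 <= n by lia.
have Vw : valid_word n (w ++ [:: j]) by rewrite valid_cat hw /valid_word /= hj.
have [_ _ V] := Q_inv hz (reach_pi Vw); rewrite pi_cat /= mulg1 in V.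
exists (f ++ g); rewrite pi_cat /= mulg1 eval_cat.
move: Hf Hg V; move: (Q (pi w) 0) (Q (pi w * t j)%g 0) (eval_free b f) (eval_free b g) => A D F G Hf Hg V.
apply: Lequiv_trans (Lq_catr [:: j] Hf) _; rewrite -!catA; apply: Lq_catl.
apply: Lequiv_trans (_ : Lq _ ((A ++ [:: j] ++ rev D) ++ D)) _; last exact: Lq_catr Hg.
rewrite -!catA; apply: Lq_catl; apply: Lequiv_sym.
by have := Lq_catl [:: j] (Lq_Krev V); rewrite cats0.
Qed.

Lemma surj w : in_PL n w -> exists f, Lq w (eval_free b f).
Proof.
move=> [hw hp]; have [f Hf] := surj_aux hw; exists f.
apply: Lequiv_trans Hf _; rewrite hp -[X in Lq _ X]cats0; apply: Lq_catl.
rewrite /Q R_v0.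
apply: (Qf_self (k:=0)) => //; lia.
Qed.

Lemma PL_free : PL_free_finite_rank n.
Proof.
exists K, b; split; first exact: b_PL.
split; first exact: surj.
exact: b_inj.
Qed.

End Main.

Definition swp (a b y : nat) : nat := if y == a then b else if y == b then a else y.
Definition gl (j y : nat) : nat :=
  if j == 0 then swp 2 3 y else if odd j then swp 1 2 y else swp 0 2 y.
Definition act (w : seq nat) (x : nat) : nat := foldr gl x w.

Lemma act_cat u v x : act (u ++ v) x = act u (act v x).
Proof. by rewrite /act foldr_cat. Qed.

Lemma gl_inv j y : gl j (gl j y) = y.
Proof.
rewrite /gl; case: (j == 0); last case: (odd j);
by case: y => [|[|[|[|y]]]].
Qed.

Lemma gl_braid i y : gl i (gl i.+1 (gl i y)) = gl i.+1 (gl i (gl i.+1 y)).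
Proof.
rewrite /gl /=; case: i => [|i] /=; first by case: y => [|[|[|[|y]]]].
case: (odd i) => /=; by case: y => [|[|[|[|y]]]].
Qed.

Lemma act_Lq n u v : Lequiv n u v -> forall x, act u x = act v x.
Proof.
elim=> {u v} [//|u v _ IH|u v w _ IH1 _ IH2|u v j hj|u v i hi] x.
- by rewrite IH.
- by rewrite IH1 IH2.
- by rewrite !act_cat /= gl_inv.
- by rewrite !act_cat /= gl_braid.
Qed.

Lemma tperm_comm n (a b c d : 'I_n) : a != c -> a != d -> b != c -> b != d ->
  (tperm a b * tperm c d = tperm c d * tperm a b)%g.
Proof.
move=> h1 h2 h3 h4.
have : (tperm c d ^ tperm a b = tperm c d)%g.
  by rewrite tpermJ !tpermD // eq_sym.
rewrite /conjg tpermV => E.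
by rewrite -{2}E mulgA -(mulgA _ (tperm a b)) tperm2 mulg1.
Qed.

Lemma PL_nonab n : 4 <= n -> PL_nonabelian n.
Proof.
move=> hn.
have h0 : 0.+1 < n by lia.
have h1 : 1.+1 < n by lia.
have h2 : 2.+1 < n by lia.
have Hc : (adj_transp n 0 * adj_transp n 2 = adj_transp n 2 * adj_transp n 0)%g.
  rewrite (adj_transpE h0) (adj_transpE h2); apply: tperm_comm;
  by rewrite -val_eqE /=.
have Hu : pi_word n [:: 0; 2; 0; 2] = 1%g.
  rewrite /= mulg1 !mulgA Hc -(mulgA (adj_transp n 2)) adj_transp_inv mulg1.
  exact: adj_transp_inv.
have Hv : pi_word n [:: 1; 0; 2; 0; 2; 1] = 1%g.
  have -> : pi_word n [:: 1; 0; 2; 0; 2; 1] = pi_word n ([:: 1] ++ [:: 0; 2; 0; 2] ++ [:: 1]) by [].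
  by rewrite !pi_cat Hu mul1g /= !mulg1 adj_transp_inv.
exists [:: 0; 2; 0; 2], [:: 1; 0; 2; 0; 2; 1]; split.
  by split => //; rewrite /valid_word /= h0 h2.
split; first by split => //; rewrite /valid_word /= h0 h1 h2.
by move/act_Lq => /(_ 0).
Qed.

Lemma PL_triv n : 2 <= n -> n <= 3 -> PL_trivial n.
Proof.
move=> h2 h3 w [hw hp].
have [E2|E3] : n = 2 \/ n = 3 by lia.
- subst n; suff : Lequiv 2 w [::] \/ Lequiv 2 w [:: 0].
    case=> // H; exfalso.
    have := Lq_pi H; rewrite hp /= mulg1 (@adj_transpE 2 0 (ltnSn 1)) => /esym/permP/(_ (Ordinal (ltnW (ltnSn 1)))).
    by rewrite tpermL perm1.
  elim: w hw {hp} => [|j w IH]; first by left; apply: Lequiv_refl.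
  rewrite /valid_word /= => /andP [hj /IH []] H.
  + have -> : j = 0 by lia.
    by right; apply: (Lq_catl [:: 0] H).
  + have -> : j = 0 by lia.
    left; apply: Lequiv_trans (Lq_catl [:: 0] H) _.
    exact: (sq_pre _ (ltnSn 1)).
- subst n; apply: (@Aw_Lq 3 0) => //.
  elim: w hw {hp} => // j w IH; rewrite /valid_word /= => /andP [hj hw].
  rewrite IH // andbT; case: j hj => [|[|j]] //.
Qed.

Theorem proposition5p3 (n : nat) (hn : 2 <= n) :
  ((PL_free_finite_rank n /\ PL_nonabelian n) <-> 4 <= n) /\
  (n <= 3 -> PL_trivial n).
Proof.
split; last exact: PL_triv.
split.
- move=> [_ [u [v [Hu [Hv Hne]]]]].
  case: (leqP 4 n) => // h4; exfalso; apply: Hne.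
  have T := PL_triv hn (h4 : n <= 3).
  apply: Lequiv_trans (Lq_cat (T u Hu) (T v Hv)) _.
  exact: Lequiv_sym (Lq_cat (T v Hv) (T u Hu)).
- by move=> h4; split; [exact: PL_free | exact: PL_nonab].
Qed.
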